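(* Let $\vec q\subseteq\mathrm{qVars}$, let $Q$ be an orthogonal projection on $\mathcal H_{\vec q}$, and $Q^\perp=I-Q$. (a) (H.boostRep) For any $p\in(0,1)$ and $\varepsilon\in(0,p)$, $$\{pI,\;I\}\,\square\,\{Q_{\vec q},\;I\}\ \hookrightarrow_{\mathrm{tot}}^{*}\ \mathbf{repeat}\ \lceil\log_{1-\varepsilon}(1-p)\rceil\ \mathbf{do}\ \big(\mathbf{if}\ Q^\perp[\vec q]\ \mathbf{then}\ \{\varepsilon Q^\perp_{\vec q},\;Q^\perp_{\vec q}\}\,\square\,\{Q_{\vec q},\;I\}\big).$$ (b) (H.boostWhile) For any $\varepsilon\in(0,1)$, $$\{I\}\,\square\,\{Q_{\vec q}\}\ \hookrightarrow_{\mathrm{tot}}^{*}\ \mathbf{while}\ Q^\perp[\vec q]\ \mathbf{do}\ \{\varepsilon Q^\perp_{\vec q},\;Q^\perp_{\vec q}\}\,\square\,\{Q_{\vec q},\;I\}.$$ Here $\{P,P'\}\square\{Q,Q'\}$ denotes a single hole carrying the two specifications $(P,Q)$ and $(P',Q')$.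
   Context: Quantum setting. There is a finite set $\mathrm{qVars}$ of quantum variables; each $q$ has Hilbert space $\mathcal H_q=\mathbb C^{\Sigma_q}$ ($\Sigma_q$ finite) with standard orthonormal basis $\{|x\rangle\}_{x\in\Sigma_q}$. For a set $\vec q\subseteq\mathrm{qVars}$, $\mathcal H_{\vec q}=\bigotimes_{q\in\vec q}\mathcal H_q$ with standard basis labelled by $\Sigma_{\vec q}=\prod_{q\in\vec q}\Sigma_q$, and $\mathcal H=\mathcal H_{\mathrm{qVars}}$. For an operator $A$ on $\mathcal H_{\vec q}$, $A_{\vec q}=A\otimes I$ on $\mathcal H$. $\preceq$ is the Löwner order. A partial state is a positive semidefinite (PSD) $\rho$ on $\mathcal H$ with $\operatorname{tr}\rho\le1$. A predicate is an operator $P$ on $\mathcal H$ with $0\preceq P\preceq I$; ''$P\Rightarrow Q$'' means $P\preceq Q$. A measurement on $\vec q$ is a family $\vec M=\{M_\omega\}_{\omega\in\Omega}$ ($\Omega$ finite) of PSD operators on $\mathcal H_{\vec q}$ with $\sum_\omega M_\omega=I$; write $\mathcal M_{\omega}(X)=\sqrt{M_{\omega,\vec q}}\,X\,\sqrt{M_{\omega,\vec q}}$. A binary measurement is given by an operator $B$ on $\mathcal H_{\vec q}$ with $0\preceq B\preceq I$, and $\mathcal B_{0,\vec q}(X)=\sqrt{(I-B)_{\vec q}}\,X\sqrt{(I-B)_{\vec q}}$, $\mathcal B_{1,\vec q}(X)=\sqrt{B_{\vec q}}\,X\sqrt{B_{\vec q}}$. Quantum while language: $S::=\mathbf{skip}\mid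 \vec q:=|0\rangle\mid \vec q\mathrel{*}=U\mid S_1;S_2\mid \mathbf{repeat}\ N\ \mathbf{do}\ S\mid \mathbf{case}\ \vec M[\vec q]\ \mathbf{of}\ \{\omega: S_\omega\}_{\omega\in\Omega}\mid \mathbf{while}\ B[\vec q]\ \mathbf{do}\ S$, with $U$ unitary on $\mathcal H_{\vec q}$, $N\in\mathbb N$. Denotational semantics $[\![S]\!]$ on partial states: $[\![\mathbf{skip}]\!](\rho)=\rho$; $[\![\vec q:=|0\rangle]\!](\rho)=\sum_{x\in\Sigma_{\vec q}}|0\rangle\langle x|_{\vec q}\,\rho\,|x\rangle\langle0|_{\vec q}$; $[\![\vec q\mathrel{*}=U]\!](\rho)=U_{\vec q}\rho U_{\vec q}^\dagger$; $[\![S_1;S_2]\!]=[\![S_2]\!]\circ[\![S_1]\!]$; $[\![\mathbf{repeat}\ N\ \mathbf{do}\ S]\!]=[\![S]\!]^N$; $[\![\mathbf{case}\ldots]\!](\rho)=\sum_\omega[\![S_\omega]\!](\mathcal M_\omega(\rho))$; $[\![\mathbf{while}\ B[\vec q]\ \mathbf{do}\ S]\!](\rho)=\sum_{k\ge0}(\mathcal B_{0,\vec q}\circ([\![S]\!]\circ\mathcal B_{1,\vec q})^k)(\rho)$. Hoare triples: $\models_{\mathrm{tot}}\{P\}S\{Q\}$ iff $\operatorname{tr}(P\rho)\le\operatorname{tr}(Q[\![S]\!](\rho))$ for all partial states $\rho$; $\models_{\mathrm{par}}\{P\}S\{Q\}$ iff $\operatorname{tr}(P\rho)\le\operatorname{tr}(Q[\![S]\!](\rho))+\operatorname{tr}\rho-\operatorname{tr}[\![S]\!](\rho)$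 for all partial states $\rho$. Syntactic sugar: $\mathbf{if}\ B[\vec q]\ \mathbf{then}\ S_1\ \mathbf{else}\ S_0$ abbreviates $\mathbf{case}\ \{1:B,0:I-B\}[\vec q]\ \mathbf{of}\ \{1:S_1,0:S_0\}$; omitting else means $S_0=\mathbf{skip}$. Programs with holes. The grammar is extended by holes $\{P\}\,\square\,\{Q\}$ ($P,Q$ predicates); more generally a hole may carry a family of specifications $\{P_\lambda\}\,\square\,\{Q_\lambda\}$, $\lambda\in\Lambda$ (written e.g. $\{P,P'\}\square\{Q,Q'\}$ for two). A program without holes is concrete. A refinement rule applied to a hole with a family must have its side conditions satisfied for every $\lambda$; the predicates it introduces may depend on $\lambda$, but the syntactic program produced (variables, unitaries, measurements, $N$, $B$) is the same for all $\lambda$; holes it creates carry the families indexed by $\lambda$ together with any newly introduced index. Refinement for partial correctness $\hookrightarrow_{\mathrm{par}}$ (for predicates $P,Q$): (H.skip) $\{P\}\square\{Q\}\hookrightarrow\mathbf{skip}$ if $P\Rightarrow Q$; (H.init) $\{P\}\square\{Q\}\hookrightarrow\vec q:=|0\rangle$ if $P\Rightarrow\sum_{x\in\Sigma_{\vec q}}|x\rangle\langle0|_{\vec q}Q|0\rangle\langle x|_{\vec q}$; (H.unit) $\{P\}\square\{Q\}\hookrightarrow\vec q\mathrel{*}=U$ if $P\Rightarrow U_{\vec q}^\dagger QU_{\vec q}$; (H.seq) $\{P\}\square\{Q\}\hookrightarrow\{P\}\square\{R\};\{R\}\square\{Q\}$ for any predicate $R$; (HP.split) $\{P\}\square\{Q\}\hookrightarrow\{P_\gamma\}\square\{Q_\gamma\}$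 ($\gamma\in\Gamma$) if $P\Rightarrow\sum_\gamma p_\gamma P_\gamma$ and $\sum_\gamma p_\gamma Q_\gamma\Rightarrow Q$ for a probability distribution $(p_\gamma)$; (H.repeat) $\{P\}\square\{Q\}\hookrightarrow\mathbf{repeat}\ N\ \mathbf{do}\ \{R_j\}\square\{R_{j+1}\}$ (family over $j\in\{0,\dots,N-1\}$) for predicates $R_0,\dots,R_N$ with $P\Rightarrow R_0$, $R_N\Rightarrow Q$; (H.case) $\{P\}\square\{Q\}\hookrightarrow\mathbf{case}\ \vec M[\vec q]\ \mathbf{of}\ \{\omega:\{P_\omega\}\square\{Q\}\}_{\omega}$ if $P\Rightarrow\sum_\omega\mathcal M_\omega(P_\omega)$; (HP.while) $\{P\}\square\{Q\}\hookrightarrow\mathbf{while}\ B[\vec q]\ \mathbf{do}\ \{R\}\square\{\mathcal B_{0,\vec q}(Q)+\mathcal B_{1,\vec q}(R)\}$ for a predicate $R$ with $P\Rightarrow\mathcal B_{0,\vec q}(Q)+\mathcal B_{1,\vec q}(R)$. Composite rules: (C.seqL/C.seqR/C.repeat/C.case/C.while) if $S'\hookrightarrow S$ then replacing one occurrence of $S'$ as the left or right component of a sequence, the body of a repeat, one branch of a case, or the body of a while by $S$ is a refinement step. Refinement for total correctness $\hookrightarrow_{\mathrm{tot}}$ uses all (H.* ) and (C.* ) rules above but replaces (HP.while) by (HT.while): $\{P\}\square\{Q\}\hookrightarrow\mathbf{while}\ B[\vec q]\ \mathbf{do}\ \{R_{n+1}\}\square\{\mathcal B_{0,\vec q}(Q)+\mathcal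 B_{1,\vec q}(R_n)\}$ (family over $n\in\mathbb N$) for predicates $(R_n)_{n\in\mathbb N}$ with $R_0=0$, $R_n\Rightarrow R_{n+1}$, whose limit $R=\lim_n R_n$ satisfies $P\Rightarrow\mathcal B_{0,\vec q}(Q)+\mathcal B_{1,\vec q}(R)$; and replaces (HP.split) by (HT.split), identical except that $(p_\gamma)$ need only be nonnegative reals. $\hookrightarrow^k$ denotes $k$ steps and $\hookrightarrow^*$ the reflexive-transitive closure. *)

(* Defs.v *)
From HB Require Import structures.
From mathcomp Require Import all_boot all_order all_algebra.
From mathcomp Require Import complex.
From mathcomp Require Import boolp classical_sets reals topology normedtype sequences exp.

Set Implicit Arguments.
Unset Strict Implicit.
Unset Printing Implicit Defensive.

Import Order.TTheory GRing.Theory Num.Theory.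
Import numFieldNormedType.Exports.
Local Open Scope ring_scope.
Local Open Scope classical_set_scope.

Section QuantumRefinement.

Variable R : realType.
Local Notation C := (R[i]).

Definition rc (x : R) : C := (x%:C)%C.

(* quantum variables qv (a finite set); variable q has classical basis
   Sigma_q = 'I_(dim q).+1, whose element ord0 is the label "0" *)
Variable qv : finType.
Variable dim : qv -> nat.

(* basis labels of the whole space H = H_qVars *)
Definition gT := {dffun forall q : qv, 'I_(dim q).+1}.
(* basis labels Sigma_qs of H_qs, for a set qs of quantum variables *)
Definition regT (qs : {set qv}) :=
  {dffun forall q : {x : qv | x \in qs}, 'I_(dim (sval q)).+1}.

Definition op := 'M[C]_#|gT|.
Definition opq (qs : {set qv}) := 'M[C]_#|regT qs|.

Definition restr (qs : {set qv}) (x : gT) : regT qs := [ffun q => x (sval q)].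

(* A_qs = A (x) I on H *)
Definition liftop (qs : {set qv}) (A : opq qs) : op :=
  \matrix_(i, j)
    (let x : gT := enum_val i in let y : gT := enum_val j in
     if [forall q, (q \notin qs) ==> (x q == y q)]
     then A (enum_rank (restr qs x)) (enum_rank (restr qs y)) else 0).

Definition ketbra (qs : {set qv}) (x y : regT qs) : opq qs :=
  delta_mx (enum_rank x) (enum_rank y).
Definition reg0 (qs : {set qv}) : regT qs := [ffun q => ord0].

Definition adjmx m n (A : 'M[C]_(m, n)) : 'M[C]_(n, m) := (map_mx conjc A)^T.

Definition psd n (A : 'M[C]_n) : Prop :=
  forall v : 'cV[C]_n, 0 <= (adjmx v *m A *m v) 0 0.
Definition lowner n (A B : 'M[C]_n) : Prop := psd (B - A).
Definition is_pred (P : op) : Prop := lowner 0 P /\ lowner P 1%:M.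
Definition is_unitary n (U : 'M[C]_n) : Prop := adjmx U *m U = 1%:M.
Definition is_orth_proj n (Q : 'M[C]_n) : Prop := adjmx Q = Q /\ Q *m Q = Q.
Definition psd_sqrt_of n (S A : 'M[C]_n) : Prop := psd S /\ S *m S = A.
Definition is_measurement qs k (M : 'I_k -> opq qs) : Prop :=
  (forall w, psd (M w)) /\ \sum_(w < k) M w = 1%:M.

(* precondition of initialisation: sum_x |x><0|_qs Q |0><x|_qs *)
Definition init_pre (qs : {set qv}) (Q : op) : op :=
  \sum_(x : regT qs) liftop (ketbra x (reg0 qs)) *m Q *m liftop (ketbra (reg0 qs) x).

Definition mx_lim (f : nat -> op) (L : op) : Prop :=
  forall i j, ((fun n => complex.Re (f n i j)) @ \oo --> complex.Re (L i j)) /\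
              ((fun n => complex.Im (f n i j)) @ \oo --> complex.Im (L i j)).

(* programs with holes; a hole carries a set of specifications (P,Q),
   given as a relation F : op -> op -> Prop *)
Inductive prog : Type :=
| Skip
| Init (qs : {set qv})
| Unit (qs : {set qv}) (U : opq qs)
| Seq (S1 S2 : prog)
| Repeat (N : nat) (S : prog)
| Case (qs : {set qv}) (k : nat) (M : 'I_k -> opq qs) (Ss : 'I_k -> prog)
| While (qs : {set qv}) (B : opq qs) (S : prog)
| Hole (F : op -> op -> Prop).

(* if B[qs] then S1 else S0  :=  case {1 : B, 0 : I - B}[qs] of {1 : S1, 0 : S0} *)
Definition ifte (qs : {set qv}) (B : opq qs) (S1 S0 : prog) : prog :=
  @Case qs 2 (fun w => if w == ord0 then 1%:M - B else B)
                   (fun w => if w == ord0 then S0 else S1).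

Definition hole_is (F : op -> op -> Prop) (L : Type) (Pf Qf : L -> op) : Prop :=
  forall P Q, F P Q <-> exists l, Pf l = P /\ Qf l = Q.

Inductive refine_tot : prog -> prog -> Prop :=
| H_skip F L (Pf Qf : L -> op) :
    hole_is F Pf Qf -> (forall l, lowner (Pf l) (Qf l)) ->
    refine_tot (Hole F) Skip
| H_init F L (Pf Qf : L -> op) qs :
    hole_is F Pf Qf -> (forall l, lowner (Pf l) (init_pre qs (Qf l))) ->
    refine_tot (Hole F) (Init qs)
| H_unit F L (Pf Qf : L -> op) qs (U : opq qs) :
    hole_is F Pf Qf -> is_unitary U ->
    (forall l, lowner (Pf l) (adjmx (liftop U) *m Qf l *m liftop U)) ->
    refine_tot (Hole F) (Unit U)
| H_seq F L (Pf Qf : L -> op) (Rf : L -> op) G1 G2 :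
    hole_is F Pf Qf -> (forall l, is_pred (Rf l)) ->
    hole_is G1 Pf Rf -> hole_is G2 Rf Qf ->
    refine_tot (Hole F) (Seq (Hole G1) (Hole G2))
| HT_split F L (Pf Qf : L -> op) (k : L -> nat) (pw : forall l, 'I_(k l) -> R)
    (Pg Qg : forall l, 'I_(k l) -> op) G :
    hole_is F Pf Qf ->
    (forall l g, 0 <= pw l g) ->
    (forall l g, is_pred (Pg l g) /\ is_pred (Qg l g)) ->
    (forall l, lowner (Pf l) (\sum_(g < k l) rc (pw l g) *: Pg l g)) ->
    (forall l, lowner (\sum_(g < k l) rc (pw l g) *: Qg l g) (Qf l)) ->
    hole_is G (fun lg : {l : L & 'I_(k l)} => Pg (projT1 lg) (projT2 lg))
              (fun lg : {l : L & 'I_(k l)} => Qg (projT1 lg) (projT2 lg)) ->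
    refine_tot (Hole F) (Hole G)
| H_repeat F L (Pf Qf : L -> op) N (Rj : L -> nat -> op) G :
    hole_is F Pf Qf ->
    (forall l j, (j <= N)%N -> is_pred (Rj l j)) ->
    (forall l, lowner (Pf l) (Rj l 0%N)) ->
    (forall l, lowner (Rj l N) (Qf l)) ->
    hole_is G (fun lj : L * 'I_N => Rj lj.1 lj.2) (fun lj : L * 'I_N => Rj lj.1 lj.2.+1) ->
    refine_tot (Hole F) (Repeat N (Hole G))
| H_case F L (Pf Qf : L -> op) qs k (M : 'I_k -> opq qs) (Sq : 'I_k -> opq qs)
    (Pw : L -> 'I_k -> op) (G : 'I_k -> op -> op -> Prop) :
    hole_is F Pf Qf -> is_measurement M ->
    (forall w, psd_sqrt_of (Sq w) (M w)) ->
    (forall l w, is_pred (Pw l w)) ->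
    (forall l, lowner (Pf l)
       (\sum_(w < k) liftop (Sq w) *m Pw l w *m liftop (Sq w))) ->
    (forall w, hole_is (G w) (fun l => Pw l w) Qf) ->
    refine_tot (Hole F) (Case M (fun w => Hole (G w)))
| HT_while F L (Pf Qf : L -> op) qs (B : opq qs) (S0 S1 : opq qs)
    (Rn : L -> nat -> op) (Rlim : L -> op) G :
    hole_is F Pf Qf ->
    lowner 0 B -> lowner B 1%:M ->
    psd_sqrt_of S0 (1%:M - B) -> psd_sqrt_of S1 B ->
    (forall l n, is_pred (Rn l n)) ->
    (forall l, Rn l 0%N = 0) ->
    (forall l n, lowner (Rn l n) (Rn l n.+1)) ->
    (forall l, mx_lim (Rn l) (Rlim l)) ->
    (forall l, lowner (Pf l) (liftop S0 *m Qf l *m liftop S0 +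
                              liftop S1 *m Rlim l *m liftop S1)) ->
    hole_is G (fun ln : L * nat => Rn ln.1 ln.2.+1)
              (fun ln : L * nat => liftop S0 *m Qf ln.1 *m liftop S0 +
                                   liftop S1 *m Rn ln.1 ln.2 *m liftop S1) ->
    refine_tot (Hole F) (While B (Hole G))
| C_seqL S' S T : refine_tot S' S -> refine_tot (Seq S' T) (Seq S T)
| C_seqR S' S T : refine_tot S' S -> refine_tot (Seq T S') (Seq T S)
| C_repeat N S' S : refine_tot S' S -> refine_tot (Repeat N S') (Repeat N S)
| C_case qs k (M : 'I_k -> opq qs) (Ss : 'I_k -> prog) (w : 'I_k) S :
    refine_tot (Ss w) S ->
    refine_tot (Case M Ss) (Case M (fun v => if v == w then S else Ss v))
| C_while qs (B : opq qs) S' S :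
    refine_tot S' S -> refine_tot (While B S') (While B S).

Inductive refine_tot_star : prog -> prog -> Prop :=
| rts_refl S : refine_tot_star S S
| rts_step S1 S2 S3 : refine_tot S1 S2 -> refine_tot_star S2 S3 -> refine_tot_star S1 S3.

End QuantumRefinement.

(* Main.v *)
Require Import Defs.
From HB Require Import structures.
From mathcomp Require Import all_boot all_order all_algebra.
From mathcomp Require Import complex.
From mathcomp Require Import boolp classical_sets reals topology normedtype sequences exp.
From mathcomp Require Import ring lra.
Import Order.TTheory GRing.Theory Num.Theory.
Import numFieldNormedType.Exports.
Local Open Scope ring_scope.
Local Open Scope classical_set_scope.
Set Implicit Arguments.
Unset Strict Implicit.
Unset Printing Implicit Defensive.

Section L.
Variable R : realType.
Variable qv : finType.
Variable dim : qv -> nat.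
Variable qs : {set qv}.
Local Notation gT := (gT dim).
Local Notation regT := (regT dim qs).
Local Notation op := (op R dim).
Local Notation opq := (opq R dim qs).

Definition agree (x y : gT) : bool := [forall q, (q \notin qs) ==> (x q == y q)].

Lemma agreeP (x y : gT) : reflect (forall q, q \notin qs -> x q = y q) (agree x y).
Proof.
apply: (iffP forallP) => H q; first by move=> nq; move: (H q); rewrite nq => /eqP.
by apply/implyP => nq; rewrite H.
Qed.

Lemma agree_sym x y : agree x y = agree y x.
Proof. by apply/agreeP/agreeP => H q nq; rewrite H. Qed.

Lemma agree_trans x y z : agree x y -> agree y z -> agree x z.
Proof. by move=> /agreeP H1 /agreeP H2; apply/agreeP => q nq; rewrite H1 // H2. Qed.

Definition glue (x : gT) (r : regT) : gT :=
  finfun (fun q => (if q \in qs as b return (q \in qs = b -> 'I_(dim q).+1)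
                   then fun h => r (exist _ q h) else fun _ => x q) erefl).
Lemma glue_in x r q (h : q \in qs) : glue x r q = r (exist _ q h).
Proof.
rewrite ffunE; move: (erefl (q \in qs)).
rewrite {2 3}h => e; by rewrite (eq_irrelevance e h).
Qed.
Lemma glue_out x r q (h : q \notin qs) : glue x r q = x q.
Proof. rewrite ffunE; move: (erefl (q \in qs)). by rewrite {2 3}(negbTE h). Qed.

Lemma restr_glue x r : restr qs (glue x r) = r.
Proof. by apply/ffunP => -[q h]; rewrite ffunE /= glue_in. Qed.
Lemma agree_glue x r : agree x (glue x r).
Proof. by apply/agreeP => q nq; rewrite glue_out. Qed.
Lemma glue_restr x y : agree x y -> glue x (restr qs y) = y.
Proof.
move=> /agreeP H; apply/ffunP => q; case: (boolP (q \in qs)) => h.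
  by rewrite glue_in ffunE.
by rewrite glue_out // H.
Qed.
Lemma agree_restr_eq x y : agree x y -> restr qs x = restr qs y -> x = y.
Proof.
move=> /agreeP H E; apply/ffunP => q; case: (boolP (q \in qs)) => h; last by rewrite H.
by have := congr1 (fun f : regT => f (exist _ q h)) E; rewrite !ffunE.
Qed.

Lemma liftopE (A : opq) i j : liftop A i j =
  if agree (enum_val i) (enum_val j)
  then A (enum_rank (restr qs (enum_val i))) (enum_rank (restr qs (enum_val j))) else 0.
Proof. by rewrite mxE. Qed.

Lemma sum_enum (T : finType) (F : T -> R[i]) :
  \sum_(k < #|T|) F (enum_val k) = \sum_z F z.
Proof.
rewrite [RHS](reindex (@enum_val T predT)) //.
by exists (@enum_rank T) => z _; rewrite ?enum_valK ?enum_rankK.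
Qed.

Lemma liftopD (A B : opq) : liftop (A + B) = liftop A + liftop B.
Proof. by apply/matrixP => i j; rewrite !mxE /=; case: ifP => _; rewrite ?addr0 ?mxE. Qed.
Lemma liftopN (A : opq) : liftop (- A) = - liftop A.
Proof. by apply/matrixP => i j; rewrite !mxE /=; case: ifP => _; rewrite ?oppr0 ?mxE. Qed.
Lemma liftopB (A B : opq) : liftop (A - B) = liftop A - liftop B.
Proof. by rewrite liftopD liftopN. Qed.

Lemma liftop1 : liftop (1%:M : opq) = 1%:M.
Proof.
apply/matrixP => i j; rewrite liftopE !mxE.
case: ifP => Ha.
  rewrite (inj_eq enum_rank_inj); congr ((_ : bool)%:R).
  apply/eqP/eqP => [E|->//].
  by apply: enum_val_inj; apply: agree_restr_eq.
case: (i =P j) => // E; by rewrite E in Ha; move: Ha; have -> : agree (enum_val j) (enum_val j) by apply/agreeP.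
Qed.

Lemma liftopM (A B : opq) : liftop (A *m B) = liftop A *m liftop B.
Proof.
apply/matrixP => i j; rewrite liftopE !mxE.
set x := enum_val i; set y := enum_val j.
pose F := (fun z => (if agree x z then A (enum_rank (restr qs x)) (enum_rank (restr qs z)) else 0) * (if agree z y then B (enum_rank (restr qs z)) (enum_rank (restr qs y)) else 0)).
rewrite (eq_bigr (fun k => F (enum_val k))); last by move=> k _; rewrite !liftopE.
rewrite (sum_enum F) /F.
case: ifP => Hxy; last first.
  apply/esym/big1 => z _; case: ifP => H1; case: ifP => H2; rewrite ?mul0r ?mulr0 //.
  by rewrite (agree_trans H1 H2) in Hxy.
rewrite (bigID (agree x)) /= [X in _ + X]big1 ?addr0; last by move=> z /negbTE ->; rewrite mul0r.
rewrite (reindex_onto (glue x) (restr qs)); last by move=> z Hz; rewrite glue_restr.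
symmetry; transitivity (\sum_(r : regT) A (enum_rank (restr qs x)) (enum_rank r) * B (enum_rank r) (enum_rank (restr qs y))).
  apply: eq_big => r /=; first by rewrite agree_glue restr_glue eqxx.
  move=> _; rewrite agree_glue restr_glue.
  by rewrite (agree_trans _ Hxy) // agree_sym agree_glue.
rewrite -(sum_enum (fun r => A (enum_rank (restr qs x)) (enum_rank r) * B (enum_rank r) (enum_rank (restr qs y)))).
by apply: eq_bigr => k _; rewrite enum_valK.
Qed.

Lemma liftop_adj (A : opq) : adjmx (liftop A) = liftop (adjmx A).
Proof.
apply/matrixP => i j; rewrite /adjmx [in RHS]liftopE !mxE /=.
rewrite -/(agree (enum_val j) (enum_val i)) agree_sym.
by case: ifP => _; rewrite ?mxE ?conjc0.
Qed.

End L.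

Section P.
Variable R : realType.
Local Notation C := (R[i]).
Variable n : nat.
Implicit Types A B : 'M[C]_n.

Lemma psd0 : psd (0 : 'M[C]_n).
Proof. by move=> v; rewrite mulmx0 mul0mx mxE. Qed.

Lemma psdD A B : psd A -> psd B -> psd (A + B).
Proof. by move=> HA HB v; rewrite mulmxDr mulmxDl mxE addr_ge0. Qed.

Lemma psdZ (c : R) A : 0 <= c -> psd A -> psd (rc c *: A).
Proof.
move=> c0 HA v; rewrite -scalemxAr -scalemxAl mxE mulr_ge0 //.
by rewrite /rc ler0c.
Qed.

Lemma lowner_eq A B : A = B -> lowner A B.
Proof. by move=> ->; rewrite /lowner subrr; apply: psd0. Qed.

Lemma adjmxM m p (A : 'M[C]_(m, n)) (B : 'M[C]_(n, p)) :
  adjmx (A *m B) = adjmx B *m adjmx A.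
Proof. by rewrite /adjmx map_mxM trmx_mul. Qed.

Lemma adjmxK m p (A : 'M[C]_(m, p)) : adjmx (adjmx A) = A.
Proof. by apply/matrixP => i j; rewrite /adjmx !mxE conjcK. Qed.

Lemma psd_gram (w : 'cV[C]_n) : 0 <= (adjmx w *m w) 0 0.
Proof.
rewrite mxE sumr_ge0 // => k _; rewrite /adjmx !mxE mulrC.
exact: mulcJ_ge0.
Qed.

Lemma psd_proj A : is_orth_proj A -> psd A.
Proof.
move=> [Ha Hi] v.
rewrite -Hi -{1}Ha mulmxA -adjmxM -mulmxA; exact: psd_gram.
Qed.

Lemma adjmx1 : adjmx (1%:M : 'M[C]_n) = 1%:M.
Proof.
by apply/matrixP => i j; rewrite /adjmx !mxE conjc_nat eq_sym.
Qed.

Lemma psd1 : psd (1%:M : 'M[C]_n).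
Proof. by apply: psd_proj; split; [exact: adjmx1 | rewrite mulmx1]. Qed.

Lemma adjmxB A B : adjmx (A - B) = adjmx A - adjmx B.
Proof. by apply/matrixP => i j; rewrite /adjmx !mxE rmorphB. Qed.

Lemma orth_projC A : is_orth_proj A -> is_orth_proj (1%:M - A).
Proof.
move=> [Ha Hi]; split; first by rewrite adjmxB adjmx1 Ha.
by rewrite mulmxBl mul1mx mulmxBr mulmx1 Hi subrr subr0.
Qed.

End P.

Lemma boost_N (R : realType) (p eps : R) : 0 < p < 1 -> 0 < eps < p ->
  let N := absz (Num.ceil (ln (1 - p) / ln (1 - eps))) in
  (0 < N)%N /\ (1 - eps) ^+ N <= 1 - p.
Proof.
move=> /andP[p0 p1] /andP[e0 ep] N.
have a0 : 0 < 1 - eps by rewrite subr_gt0 (lt_trans ep p1).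
have a1 : 1 - eps < 1 by rewrite ltrBlDr ltrDl.
have b0 : 0 < 1 - p by rewrite subr_gt0.
have b1 : 1 - p < 1 by rewrite ltrBlDr ltrDl.
have la : ln (1 - eps) < 0 by apply: ln_lt0; rewrite a0 a1.
have lb : ln (1 - p) < 0 by apply: ln_lt0; rewrite b0 b1.
set r := ln (1 - p) / ln (1 - eps).
have r0 : 0 < r by rewrite /r nmulr_rgt0 // invr_lt0.
have cr : 0 < Num.ceil r by rewrite Num.Theory.ceil_gt0.
have NE : (N%:R : R) = (Num.ceil r)%:~R by rewrite -[X in _ = X%:~R]gez0_abs ?ltW.
split; first by rewrite /N absz_gt0 gt_eqF.
have NR : r <= N%:R by rewrite NE Num.Theory.ceil_ge.
rewrite -ler_ln ?posrE ?exprn_gt0 // lnXn // -mulr_natr.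
have -> : ln (1 - p) = r * ln (1 - eps) by rewrite /r mulfVK // ltr0_neq0.
nra.
Qed.


Lemma Re_rcM (R : realType) (c : R) (z : R[i]) : complex.Re (rc c * z) = c * complex.Re z.
Proof. by case: z => a b; rewrite /rc /= mul0r subr0. Qed.
Lemma Im_rcM (R : realType) (c : R) (z : R[i]) : complex.Im (rc c * z) = c * complex.Im z.
Proof. by case: z => a b; rewrite /rc /= mul0r addr0. Qed.

Lemma cvg_c (R : realType) (eps : R) : 0 < eps < 1 ->
  (fun n => 1 - (1 - eps) ^+ n) @ \oo --> (1 : R).
Proof.
move=> /andP[e0 e1].
rewrite -[X in _ --> X]subr0; apply: cvgB; first exact: cvg_cst.
apply: cvg_expr; rewrite ger0_norm ?subr_ge0 ?ltW //.
by rewrite ltrBlDr ltrDl.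
Qed.

Lemma cvg_cx (R : realType) (eps x : R) : 0 < eps < 1 ->
  (fun n => (1 - (1 - eps) ^+ n) * x) @ \oo --> x.
Proof.
move=> h; rewrite -[X in _ --> X]mul1r.
by apply: cvgMr_tmp; apply: cvg_c.
Qed.

Lemma sum2 (V : nmodType) (F : 'I_2 -> V) : \sum_(g < 2) F g = F ord0 + F ord_max.
Proof. by rewrite big_ord_recl big_ord1; congr (_ + F _); apply: val_inj. Qed.

Lemma rcB (R : realType) (a b : R) : rc (a - b) = rc a - rc b.
Proof. by rewrite /rc rmorphB. Qed.
Lemma rcD (R : realType) (a b : R) : rc (a + b) = rc a + rc b.
Proof. by rewrite /rc rmorphD. Qed.
Lemma rcM (R : realType) (a b : R) : rc (a * b) = rc a * rc b.
Proof. by rewrite /rc rmorphM. Qed.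
Lemma rc1 (R : realType) : rc (1 : R) = 1.
Proof. by rewrite /rc rmorph1. Qed.
Lemma rc0 (R : realType) : rc (0 : R) = 0.
Proof. by rewrite /rc rmorph0. Qed.

Section Main.
Variable R : realType.
Variable qv : finType.
Variable dim : qv -> nat.
Variable qs : {set qv}.
Variable Q : opq R dim qs.
Hypothesis HQ : is_orth_proj Q.
Local Notation op := (op R dim).
Local Notation Qt := (liftop Q).
Local Notation Pt := (liftop (1%:M - Q)).

Lemma PtE : Pt = 1%:M - Qt.
Proof. by rewrite liftopB liftop1. Qed.
Lemma sumQP : Qt + Pt = 1%:M.
Proof. by rewrite PtE addrC subrK. Qed.
Lemma QQ : Qt *m Qt = Qt.
Proof. by rewrite -liftopM HQ.2. Qed.
Lemma Qt_proj : is_orth_proj Qt.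
Proof. by split; [rewrite liftop_adj HQ.1 | exact: QQ]. Qed.
Lemma Pt_proj : is_orth_proj Pt.
Proof. rewrite PtE; exact: orth_projC Qt_proj. Qed.
Lemma PP : Pt *m Pt = Pt.
Proof. exact: Pt_proj.2. Qed.
Lemma QP : Qt *m Pt = 0.
Proof. by rewrite PtE mulmxBr mulmx1 QQ subrr. Qed.
Lemma PQ : Pt *m Qt = 0.
Proof. by rewrite PtE mulmxBl mul1mx QQ subrr. Qed.
Lemma psdQ : psd Qt. Proof. exact: psd_proj Qt_proj. Qed.
Lemma psdP : psd Pt. Proof. exact: psd_proj Pt_proj. Qed.

Lemma sandQ (c : R) : Qt *m (Qt + rc c *: Pt) *m Qt = Qt.
Proof. by rewrite mulmxDr -scalemxAr QP scaler0 addr0 QQ QQ. Qed.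
Lemma sandP (c : R) : Pt *m (rc c *: Pt) *m Pt = rc c *: Pt.
Proof. by rewrite -scalemxAr PP -scalemxAl PP. Qed.
Lemma sandQ1 : Qt *m Qt *m Qt = Qt.
Proof. by rewrite !QQ. Qed.
Lemma sandP1 : Pt *m Pt *m Pt = Pt.
Proof. by rewrite !PP. Qed.

Lemma one_sub (r : R) : 1%:M - (Qt + rc r *: Pt) = rc (1 - r) *: Pt.
Proof. by rewrite -sumQP opprD addrACA subrr add0r rcB rc1 scalerBl scale1r. Qed.

Lemma pred_comb (r : R) : 0 <= r <= 1 -> is_pred (Qt + rc r *: Pt).
Proof.
move=> /andP[r0 r1]; split; rewrite /lowner ?subr0 ?one_sub.
  by apply: psdD; [exact: psdQ | apply: psdZ => //; exact: psdP].
by apply: psdZ; [rewrite subr_ge0 | exact: psdP].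
Qed.

Lemma pred_sP (r : R) : 0 <= r <= 1 -> is_pred (rc r *: Pt).
Proof.
move=> /andP[r0 r1]; split; rewrite /lowner ?subr0.
  by apply: psdZ => //; exact: psdP.
rewrite PtE -{1}sumQP PtE.
have -> : Qt + (1%:M - Qt) - rc r *: (1%:M - Qt) = Qt + rc (1 - r) *: (1%:M - Qt).
  by rewrite -addrA rcB rc1 scalerBl scale1r.
rewrite -PtE; apply: psdD; first exact: psdQ.
by apply: psdZ; [rewrite subr_ge0 | exact: psdP].
Qed.

Lemma pred_Q : is_pred Qt.
Proof.
split; rewrite /lowner ?subr0; first exact: psdQ.
rewrite -sumQP (addrC Qt) addrK; exact: psdP.
Qed.

Lemma pred_P : is_pred Pt.
Proof. by rewrite -[Pt]scale1r -rc1; apply: pred_sP; rewrite ler01 lexx. Qed.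

Lemma pred_1 : is_pred (1%:M : op).
Proof. by split; rewrite /lowner ?subr0 ?subrr; [exact: psd1 | exact: psd0]. Qed.

Lemma hole_ext (L : Type) (Pf Qf Pf' Qf' : L -> op) :
  Pf =1 Pf' -> Qf =1 Qf' ->
  hole_is (fun P Q => exists l, Pf' l = P /\ Qf' l = Q) Pf Qf.
Proof.
move=> eP eQ P Q'; split; case=> l [<- <-]; exists l; by rewrite eP eQ.
Qed.

Variable eps : R.
Hypothesis heps : 0 < eps < 1.

Definition Gt : op -> op -> Prop := fun P Q' =>
  (P = rc eps *: liftop (1%:M - Q) /\ Q' = liftop Q) \/
  (P = liftop (1%:M - Q) /\ Q' = 1%:M).

Lemma split_ref (L : Type) (l0 : L) (c c' : L -> R) :
  (forall l, 0 <= c l <= 1) -> (forall l, c' l = (1 - c l) * eps + c l) ->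
  refine_tot (Hole (fun P Q' => exists l, rc (c' l) *: Pt = P /\ Qt + rc (c l) *: Pt = Q'))
             (Hole Gt).
Proof.
move=> hc hc'.
have [e0 e1] := andP heps.
apply: (@HT_split _ _ _ _ L (fun l => rc (c' l) *: Pt) (fun l => Qt + rc (c l) *: Pt)
   (fun _ => 2%N) (fun l g => if g == ord0 then 1 - c l else c l)
   (fun _ g => if g == ord0 then rc eps *: Pt else Pt)
   (fun _ g => if g == ord0 then Qt else 1%:M)).
- by move=> P Q'.
- move=> l g; have /andP[h0 h1] := hc l; case: (g == ord0) => //.
  by rewrite subr_ge0.
- move=> l g; case: (g == ord0); split.
  + by apply: pred_sP; rewrite !ltW.
  + exact: pred_Q.
  + exact: pred_P.
  + exact: pred_1.
- move=> l; apply: lowner_eq; rewrite sum2 /=.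
  by rewrite scalerA -rcM -scalerDl -rcD hc'.
- move=> l; apply: lowner_eq; rewrite sum2 /=.
  by rewrite -sumQP scalerDr addrA -scalerDl -rcD subrK rc1 scale1r.
- move=> P Q'; split.
  + case=> [[-> ->]|[-> ->]].
      by exists (existT _ l0 ord0).
    by exists (existT _ l0 ord_max).
  + case=> [[l g]] /= [<- <-]; rewrite /Gt.
    by case: (g == ord0); [left | right].
Qed.


Lemma subsub : 1%:M - (1%:M - Q) = Q.
Proof. by rewrite opprB addrC subrK. Qed.

Definition cseq (n : nat) : R := 1 - (1 - eps) ^+ n.

Lemma cseq_b n : 0 <= cseq n <= 1.
Proof.
have [e0 e1] := andP heps.
have a0 : 0 <= 1 - eps by rewrite subr_ge0 ltW.
have a1 : 1 - eps <= 1 by rewrite lerBlDr lerDl ltW.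
rewrite /cseq subr_ge0 exprn_ile1 //= lerBlDr lerDl; exact: exprn_ge0 a0.
Qed.

Lemma cseqS n : cseq n.+1 = (1 - cseq n) * eps + cseq n.
Proof. rewrite /cseq exprS; ring. Qed.

Lemma part_b : refine_tot_star
  (Hole (fun P Q' => P = 1%:M /\ Q' = liftop Q))
  (While (1%:M - Q) (Hole Gt)).
Proof.
have [e0 e1] := andP heps.
pose G : op -> op -> Prop := fun P Q' => exists ln : unit * nat,
   rc (cseq ln.2.+1) *: Pt = P /\ Qt + rc (cseq ln.2) *: Pt = Q'.
apply: (@rts_step _ _ _ _ (While (1%:M - Q) (Hole G))).
  apply: (@HT_while _ _ _ _ unit (fun _ => 1%:M) (fun _ => Qt) qs (1%:M - Q) Q (1%:M - Q)
     (fun _ n => rc (cseq n) *: Pt) (fun _ => Pt) G).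
  - by move=> P Q'; split; [case=> -> ->; exists tt | case=> _ [<- <-]].
  - by rewrite /lowner subr0; apply: psd_proj; apply: orth_projC.
  - by rewrite /lowner subsub; apply: psd_proj.
  - by split; [apply: psd_proj | rewrite subsub HQ.2].
  - by split; [apply: psd_proj; apply: orth_projC | rewrite (orth_projC HQ).2].
  - by move=> _ n; apply: pred_sP; apply: cseq_b.
  - by move=> _; rewrite /cseq expr0 subrr rc0 scale0r.
  - move=> _ n; rewrite /lowner -scalerBl -rcB; apply: psdZ; last exact: psdP.
    have -> : cseq n.+1 - cseq n = (1 - eps) ^+ n * eps by rewrite /cseq exprS; ring.
    apply: mulr_ge0; last exact: ltW.
    by apply: exprn_ge0; rewrite subr_ge0 ltW.
  - move=> _ i j.
    have E1 : (fun n => complex.Re ((rc (cseq n) *: Pt) i j)) =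
              (fun n => (1 - (1 - eps) ^+ n) * complex.Re (Pt i j)).
      by apply: funext => n; rewrite mxE Re_rcM.
    have E2 : (fun n => complex.Im ((rc (cseq n) *: Pt) i j)) =
              (fun n => (1 - (1 - eps) ^+ n) * complex.Im (Pt i j)).
      by apply: funext => n; rewrite mxE Im_rcM.
    by rewrite E1 E2; split; apply: cvg_cx.
  - by move=> _; apply: lowner_eq; rewrite sandQ1 sandP1 sumQP.
  - by apply: hole_ext => -[_ n] //=; rewrite sandQ1 sandP.
apply: rts_step; last exact: rts_refl.
apply: C_while.
apply: (@split_ref (unit * nat) (tt, 0%N) (fun ln => cseq ln.2) (fun ln => cseq ln.2.+1)).
  by move=> ln; apply: cseq_b.
by move=> ln; apply: cseqS.
Qed.


Definition Mmeas : 'I_2 -> opq R dim qs :=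
  fun w => if w == ord0 then 1%:M - (1%:M - Q) else 1%:M - Q.

Lemma part_a (p : R) : eps < p < 1 ->
  let N := absz (Num.ceil (ln (1 - p) / ln (1 - eps))) in
  refine_tot_star
    (Hole (fun P Q' => (P = rc p *: 1%:M /\ Q' = liftop Q) \/ (P = 1%:M /\ Q' = 1%:M)))
    (Repeat N (ifte (1%:M - Q) (Hole Gt) (Skip R dim))).
Proof.
move=> /andP[ep p1] N.
have [e0 e1] := andP heps.
have p0 : 0 < p by rewrite (lt_trans e0).
have [N0 hN] := boost_N (p := p) (eps := eps) (R := R) (ltac:(by rewrite p0 p1)) (ltac:(by rewrite e0 ep)).
rewrite -/N in N0 hN.
clearbody N.
have a0 : 0 <= 1 - eps by rewrite subr_ge0 ltW.
have a1 : 1 - eps <= 1 by rewrite lerBlDr lerDl ltW.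
pose r (b : bool) (j : nat) : R := 1 - (if b then 1 else 0) * (1 - eps) ^+ (N - j).
have rb : forall b j, 0 <= r b j <= 1.
  move=> b j; rewrite /r; have h0 := exprn_ge0 (N - j) a0.
  have h1 := exprn_ile1 (N - j) a0 a1.
  case: b; rewrite ?mul1r ?mul0r ?subr0 ?lexx ?ler01 //.
  by rewrite subr_ge0 h1 /= lerBlDr lerDl.
have rS : forall b (j : nat), (j < N)%N -> r b j = (1 - r b j.+1) * eps + r b j.+1.
  move=> b j hj; rewrite /r -(subnSK hj) exprS.
  move: (_ ^+ _) => x; case: b; ring.
pose Rj (b : bool) (j : nat) : op := Qt + rc (r b j) *: Pt.
pose G1 : op -> op -> Prop := fun P Q' => exists lj : bool * 'I_N,
  Rj lj.1 lj.2 = P /\ Rj lj.1 lj.2.+1 = Q'.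
pose Pw (l : bool * 'I_N) (w : 'I_2) : op :=
  if w == ord0 then Rj l.1 l.2.+1 else rc (r l.1 l.2) *: Pt.
pose G2 (w : 'I_2) : op -> op -> Prop := fun P Q' => exists l : bool * 'I_N,
  Pw l w = P /\ Rj l.1 l.2.+1 = Q'.
pose Sq (w : 'I_2) : opq R dim qs := if w == ord0 then Q else 1%:M - Q.
have -> : Repeat N (ifte (1%:M - Q) (Hole Gt) (Skip R dim)) =
   Repeat N (Case Mmeas (fun v => if v == ord_max then Hole Gt
                                  else if v == ord0 then Skip R dim else Hole (G2 v))).
  rewrite /ifte; congr (Repeat _ (Case _ _)); apply: funext => v.
  by case: v => -[|[|//]] h.
apply: (@rts_step _ _ _ _ (Repeat N (Hole G1))).
  apply: (@H_repeat _ _ _ _ bool (fun b => if b then rc p *: 1%:M else 1%:M)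
            (fun b => if b then Qt else 1%:M) N Rj G1).
  - move=> P Q'; split.
      by case=> [[-> ->]|[-> ->]]; [exists true | exists false].
    by case=> -[] [<- <-]; [left | right].
  - by move=> b j _; apply: pred_comb.
  - case; last by apply: lowner_eq; rewrite /Rj /r mul0r subr0 rc1 scale1r sumQP.
    rewrite /lowner /Rj -sumQP scalerDr opprD addrACA -{1}(scale1r Qt) -scalerBl.
    rewrite -scalerBl.
    have -> : (1 : R[i]) - rc p = rc (1 - p) by rewrite rcB rc1.
    rewrite -rcB.
    apply: psdD; apply: psdZ; [by rewrite subr_ge0 ltW | exact: psdQ | | exact: psdP].
    by have := hN; rewrite /r subn0 mul1r; lra.
  - case; apply: lowner_eq; rewrite /Rj /r subnn expr0 ?mul1r ?mul0r ?subrr ?subr0.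
      by rewrite rc0 scale0r addr0.
    by rewrite rc1 scale1r sumQP.
  - by move=> P Q'.
apply: (@rts_step _ _ _ _ (Repeat N (Case Mmeas (fun w => Hole (G2 w))))).
  apply: C_repeat.
  apply: (@H_case _ _ _ _ (bool * 'I_N) (fun l => Rj l.1 l.2) (fun l => Rj l.1 l.2.+1)
            qs 2 Mmeas Sq Pw G2).
  - by move=> P Q'.
  - split.
      move=> w; rewrite /Mmeas; case: (w == ord0); first by rewrite subsub; apply: psd_proj.
      by apply: psd_proj; apply: orth_projC.
    by rewrite sum2 /Mmeas /= subsub addrC subrK.
  - move=> w; rewrite /Sq /Mmeas; case: (w == ord0).
      by split; [apply: psd_proj | rewrite subsub HQ.2].
    by split; [apply: psd_proj; apply: orth_projC | rewrite (orth_projC HQ).2].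
  - move=> l w; rewrite /Pw; case: (w == ord0); first exact: pred_comb.
    exact: pred_sP.
  - move=> l; apply: lowner_eq; rewrite sum2 /Sq /Pw /=.
    by rewrite /Rj sandQ sandP.
  - by move=> w P Q'.
apply: (@rts_step _ _ _ _ (Repeat N (Case Mmeas (fun v => if v == ord0 then Skip R dim else Hole (G2 v))))).
  apply: C_repeat.
  apply: (@C_case _ _ _ qs 2 Mmeas (fun w => Hole (G2 w)) ord0 (Skip R dim)).
  apply: (@H_skip _ _ _ _ (bool * 'I_N) (fun l => Pw l ord0) (fun l => Rj l.1 l.2.+1)).
    by move=> P Q'.
  by move=> l; apply: lowner_eq.
apply: rts_step; last exact: rts_refl.
apply: C_repeat.
apply: (@C_case _ _ _ qs 2 Mmeas (fun v => if v == ord0 then Skip R dim else Hole (G2 v)) ord_max (Hole Gt)).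
have l0 : bool * 'I_N := (true, Ordinal N0).
exact: (@split_ref (bool * 'I_N) l0 (fun l => r l.1 l.2.+1) (fun l => r l.1 l.2)
          (fun l => rb _ _) (fun l => rS _ _ (ltn_ord l.2))).
Qed.

End Main.

Theorem mainTheorem6 (R : realType) (qv : finType) (dim : qv -> nat)
    (qs : {set qv}) (Q : opq R dim qs) :
  is_orth_proj Q ->
  (* (a) H.boostRep *)
  (forall p eps : R, 0 < p < 1 -> 0 < eps < p ->
     refine_tot_star
       (Hole (fun P Q' => (P = rc p *: 1%:M /\ Q' = liftop Q) \/
                          (P = 1%:M /\ Q' = 1%:M)))
       (Repeat (absz (Num.ceil (ln (1 - p) / ln (1 - eps))))
          (ifte (1%:M - Q)
             (Hole (fun P Q' => (P = rc eps *: liftop (1%:M - Q) /\ Q' = liftop Q) \/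
                                (P = liftop (1%:M - Q) /\ Q' = 1%:M)))
             (Skip R dim)))) /\
  (* (b) H.boostWhile *)
  (forall eps : R, 0 < eps < 1 ->
     refine_tot_star
       (Hole (fun P Q' => P = 1%:M /\ Q' = liftop Q))
       (While (1%:M - Q)
          (Hole (fun P Q' => (P = rc eps *: liftop (1%:M - Q) /\ Q' = liftop Q) \/
                             (P = liftop (1%:M - Q) /\ Q' = 1%:M))))).
Proof.
move=> HQ; split.
  move=> p eps /andP[p0 p1] /andP[e0 ep].
  have heps : 0 < eps < 1 by rewrite e0 (lt_trans ep p1).
  by apply: (part_a HQ heps); rewrite ep p1.
by move=> eps heps; apply: (part_b HQ heps).
Qed.
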